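(* Every deterministic algorithm requires $\Omega(\log n)$ vertex evaluations in the worst case to find the sink of an $n$-dimensional realizable Matoušek-type USO.
   Context: All vectors and matrices are over $GF(2)$; $\oplus$ denotes xor. An orientation of the hypercube $\{0,1\}^n$ is given by an outmap $o:\{0,1\}^n\to\{0,1\}^n$, the edge $\{v,v\oplus e_i\}$ being directed away from $v$ iff $o(v)_i=1$. An $n$-dimensional Matoušek-type USO is an orientation $o(v)=M(v\oplus s)$ with $M=PAP^T$ for a permutation matrix $P$ and an invertible upper-triangular $A\in\{0,1\}^{n\times n}$, and $s\in\{0,1\}^n$ its unique sink. Its dimension influence graph is the directed graph on $[n]$ with edge $(i,j)$ iff $M_{j,i}=1$. A USO is realizable if it arises from the (Stickney–Watson) reduction of a non-degenerate P-matrix LCP instance to USO sink-finding; a Matoušek-type USO is realizable iff its dimension influence graph is the reflexive transitive closure of a branching (a forest of rooted trees with edges directed away from the roots). A sink-finding algorithm queries vertices $v$ and receives $o(v)$. *)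

(* Defs.v *)
From HB Require Import structures.
From mathcomp Require Import all_boot all_order all_algebra all_fingroup.
From mathcomp Require Import Rstruct.
From Stdlib Require Rdefinitions.
Notation R := Rdefinitions.R.

Set Implicit Arguments.
Unset Strict Implicit.
Unset Printing Implicit Defensive.

Import Order.TTheory GRing.Theory Num.Theory.
Local Open Scope ring_scope.

Definition vertex (n : nat) := 'cV['F_2]_n.

(* an orientation is given by its outmap *)
Definition outmap (n : nat) := vertex n -> vertex n.

Definition upper_triangular (n : nat) (A : 'M['F_2]_n) : Prop :=
  forall i j : 'I_n, (j < i)%N -> A i j = 0.

Definition matousek_type (n : nat) (o : outmap n) : Prop :=
  exists (p : 'S_n) (A : 'M['F_2]_n) (s : vertex n),
    upper_triangular A /\ A \in unitmx /\
    forall v : vertex n,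
      o v = (perm_mx p *m A *m (perm_mx p)^T) *m (v + s).

Definition principal_submx (n : nat) (M : 'M[R]_n) (S : {set 'I_n}) :
  'M[R]_#|S| :=
  mxsub (@enum_val _ (mem S)) (@enum_val _ (mem S)) M.

Definition P_matrix (n : nat) (M : 'M[R]_n) : Prop :=
  forall S : {set 'I_n}, 0 < \det (principal_submx M S).

Definition vset (n : nat) (v : vertex n) : {set 'I_n} := [set i | v i 0 != 0].

(* complementary basis matrix of LCP  w - M z = q  for the basis J:
   column i is -M_{.,i} if i \in J (z_i basic) and e_i otherwise (w_i basic) *)
Definition basis_mx (n : nat) (M : 'M[R]_n) (J : {set 'I_n}) : 'M[R]_n :=
  \matrix_(i, j) (if j \in J then - M i j else (i == j)%:R).

Definition basic_sol (n : nat) (M : 'M[R]_n) (q : 'cV[R]_n) (J : {set 'I_n})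
  : 'cV[R]_n := invmx (basis_mx M J) *m q.

Definition lcp_nondegenerate (n : nat) (M : 'M[R]_n) (q : 'cV[R]_n) : Prop :=
  forall (J : {set 'I_n}) (i : 'I_n), basic_sol M q J i 0 != 0.

(* Stickney--Watson orientation: the edge in direction i at vertex v is
   outgoing iff the i-th basic variable of the basis J(v) is negative *)
Definition lcp_outmap (n : nat) (M : 'M[R]_n) (q : 'cV[R]_n) : outmap n :=
  fun v => \col_i (if basic_sol M q (vset v) i 0 < 0 then 1 else 0).

Definition realizable (n : nat) (o : outmap n) : Prop :=
  exists (M : 'M[R]_n) (q : 'cV[R]_n),
    P_matrix M /\ lcp_nondegenerate M q /\ forall v, o v = lcp_outmap M q v.

(* A deterministic algorithm chooses the next query from the history of
   (queried vertex, returned outmap value) pairs. *)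
Definition algorithm (n : nat) := seq (vertex n * vertex n) -> vertex n.

Fixpoint history (n : nat) (A : algorithm n) (o : outmap n) (k : nat)
  : seq (vertex n * vertex n) :=
  match k with
  | 0 => [::]
  | k.+1 => let h := history A o k in rcons h (A h, o (A h))
  end.

(* the (k+1)-st queried vertex (k = 0, 1, ...) *)
Definition query (n : nat) (A : algorithm n) (o : outmap n) (k : nat) : vertex n :=
  A (history A o k).

Definition finds_sink_within (n : nat) (A : algorithm n) (o : outmap n) (t : nat)
  : Prop :=
  exists k, (k < t)%N /\ o (query A o k) = 0.

(* Main.v *)
Require Import Defs.
From mathcomp Require Import all_boot all_order all_algebra all_fingroup zify.
From mathcomp Require Import Rstruct ring.
Set Implicit Arguments.
Unset Strict Implicit.
Unset Printing Implicit Defensive.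
Import Order.TTheory GRing.Theory Num.Theory.
Local Open Scope ring_scope.

Lemma det_rho (F : comNzRingType) n (A : 'M[F]_n) (rho : 'I_n -> nat) :
  injective rho -> (forall a b, (rho b < rho a)%N -> A a b = 0) ->
  \det A = \prod_i A i i.
Proof.
move=> rinj Az; rewrite /determinant (bigD1 (1%g : 'S_n)) //= odd_perm1 expr0 mul1r.
rewrite [X in X + _ = _](eq_bigr (fun i => A i i)); last by move=> i _; rewrite perm1.
rewrite [X in _ + X = _]big1 ?addr0 // => s s1.
have [a Ha] : exists a, (rho (s a) < rho a)%N.
  apply/existsP; apply: contraR s1 => /existsPn H.
  have Hle a : (rho a <= rho (s a))%N by rewrite leqNgt H.
  have Heq a : rho (s a) = rho a.
    apply/eqP; rewrite eqn_leq Hle andbT; rewrite leqNgt; apply/negP => lt.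
    have : (\sum_i rho (s i) <= \sum_i rho i)%N.
      by rewrite [X in (_ <= X)%N](reindex_inj (@perm_inj _ s)).
    rewrite (bigD1 a) //= [X in (_ <= X)%N](bigD1 a) //= leqNgt.
    move/negP; apply; apply: leq_trans (_ : (rho a + \sum_(i | i != a) rho (s i)).+1 <= _)%N.
      by rewrite ltnS leq_add2l; apply: leq_sum => i _; exact: Hle.
    by rewrite -addSn leq_add2r.
  by apply/eqP/permP => i; rewrite perm1; apply: rinj; rewrite Heq.
by rewrite (bigD1 a) //= Az // mul0r mulr0.
Qed.


Lemma F2_ne0 (x : 'F_2) : x != 0 -> x = 1.
Proof. by case: x => [[|[|m]] Hm] //= _; apply/val_inj. Qed.

Lemma F2_add_ne0 (x y : 'F_2) : x != 0 -> y != 0 -> x + y = 0.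
Proof. by move=> /F2_ne0 -> /F2_ne0 ->; apply/val_inj. Qed.

Section Comb.
Variable T : eqType.

Definition tot (F : T -> 'F_2) (Q : seq T) := \sum_(i <- Q) F i.
Definition suf (F : T -> 'F_2) (pi : seq T) (j : T) :=
  \sum_(i <- drop (index j pi) pi) F i.

Variable F : T -> 'F_2.

Lemma suf_cat_l j p1 p2 : j \in p1 -> suf F (p1 ++ p2) j = suf F p1 j + tot F p2.
Proof.
move=> jp; rewrite /suf index_cat jp drop_cat index_mem jp.
by rewrite big_cat.
Qed.

Lemma suf_cat_r j p1 p2 : j \notin p1 -> suf F (p1 ++ p2) j = suf F p2 j.
Proof.
move=> jp; rewrite /suf index_cat (negbTE jp) drop_cat ltnNge leq_addr /=.
by rewrite addKn.
Qed.

Lemma tot_cat p1 p2 : tot F (p1 ++ p2) = tot F p1 + tot F p2.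
Proof. by rewrite /tot big_cat. Qed.

Lemma tot_flatten Qs : (forall Q, Q \in Qs -> tot F Q = 0) -> tot F (flatten Qs) = 0.
Proof.
elim: Qs => [|Q Qs IH] H /=; first by rewrite /tot big_nil.
rewrite tot_cat H ?mem_head // IH ?addr0 // => Q' HQ'; apply: H.
by rewrite inE HQ' orbT.
Qed.

Lemma suf_flatten Qs Q j : uniq (flatten Qs) ->
  (forall Q, Q \in Qs -> tot F Q = 0) -> Q \in Qs -> j \in Q ->
  suf F (flatten Qs) j = suf F Q j.
Proof.
elim: Qs => [|Q0 Qs IH] //= U H QQ jQ.
have H' : forall Q, Q \in Qs -> tot F Q = 0.
  by move=> Q' HQ'; apply: H; rewrite inE HQ' orbT.
move: U; rewrite cat_uniq => /and3P [_ dis U].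
case: (boolP (j \in Q0)) => jQ0.
  rewrite suf_cat_l // tot_flatten // addr0.
  move: QQ; rewrite inE => /orP [/eqP -> //|QQ].
  case/negP: dis; apply/hasP; exists j => //; apply/flattenP; by exists Q.
rewrite suf_cat_r //; apply: IH => //.
move: QQ; rewrite inE => /orP [/eqP E|//].
by move: jQ0; rewrite -E jQ.
Qed.

End Comb.


Section Adv.
Variable T : eqType.

Fixpoint pairup (l : seq (seq T)) : seq (seq T) * seq T :=
  match l with
  | A :: B :: r => let pr := pairup r in ((A ++ B) :: pr.1, pr.2)
  | [:: A] => ([::], A)
  | [::] => ([::], [::])
  end.

Lemma pairup_spec l :
  [/\ flatten (pairup l).1 ++ (pairup l).2 = flatten l,
      exists l', [/\ flatten (pairup l).1 = flatten l',
                    (forall Q, Q \in l' -> Q \in l) &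
                    (forall Q, Q \in l -> Q \in (pairup l).2 :: l')],
      (pairup l).2 \in [::] :: l,
      (forall P, P \in (pairup l).1 -> exists A B, [/\ A \in l, B \in l & P = A ++ B]) &
      size (pairup l).1 = (size l)./2].
Proof.
move: {2}(size l) (leqnn (size l)) => m; elim: m l => [|m IH] [|A [|B r]] //= Hs;
  try (split=> //; rewrite ?cats0 ?inE ?eqxx ?orbT //; exists [::]; split=> // Q; rewrite !inE; done).
have Hr : (size r <= m)%N by move: Hs; rewrite !ltnS; move=> H; apply: leq_trans H; exact: leqnSn.
have [p1 [l' [f1 m1 m2]] p3 p4 p5] := IH r Hr.
split.
- by rewrite /= -catA p1 catA.
- exists (A :: B :: l'); split.
  + by rewrite /= f1 catA.
  + by move=> Q; rewrite !inE => /or3P [->|->|/m1 ->]; rewrite ?orbT.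
  + move=> Q; rewrite !inE => /or3P [->|->|/m2]; rewrite ?eqxx ?orbT //.
    by rewrite inE => /orP [->|->]; rewrite ?orbT.
- by move: p3; rewrite !inE => /orP [->|->]; rewrite ?orbT.
- move=> P; rewrite inE => /orP [/eqP ->|/p4 [a [b [ha hb ->]]]].
    by exists A, B; rewrite !inE !eqxx ?orbT.
  by exists a, b; rewrite !inE ha hb !orbT.
- by rewrite /= p5.
Qed.

Definition state := (seq T * seq (seq T))%type.
Definition ord (S : state) := S.1 ++ flatten S.2.

Definition step (G : T -> 'F_2) (S : state) : state :=
  let ev := [seq Q <- S.2 | tot G Q == 0] in
  let od := [seq Q <- S.2 | tot G Q != 0] in
  (S.1 ++ (pairup od).2, ev ++ (pairup od).1).

Definition Even (F : T -> 'F_2) (S : state) := forall Q, Q \in S.2 -> tot F Q = 0.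

Variable G : T -> 'F_2.

Lemma step_perm S : perm_eq (ord (step G S)) (ord S).
Proof.
rewrite /ord /step /= -catA perm_cat2l.
have [p1 _ _ _ _] := pairup_spec [seq Q <- S.2 | tot G Q != 0].
rewrite flatten_cat perm_catC -catA p1 -flatten_cat.
apply: perm_flatten.
by rewrite perm_filterC.
Qed.

Lemma step_even F S : Even F S -> Even F (step G S).
Proof.
move=> E Q; rewrite /step /= mem_cat => /orP [|].
  by rewrite mem_filter => /andP [_ /E].
have [_ _ _ p4 _] := pairup_spec [seq Q <- S.2 | tot G Q != 0].
move=> /p4 [A [B [HA HB ->]]].
move: HA HB; rewrite !mem_filter => /andP [_ /E eA] /andP [_ /E eB].
by rewrite tot_cat eA eB addr0.
Qed.

Lemma step_even_self S : Even G (step G S).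
Proof.
move=> Q; rewrite /step /= mem_cat => /orP [|].
  by rewrite mem_filter => /andP [/eqP].
have [_ _ _ p4 _] := pairup_spec [seq Q <- S.2 | tot G Q != 0].
move=> /p4 [A [B [HA HB ->]]].
move: HA HB; rewrite !mem_filter => /andP [eA _] /andP [eB _].
by rewrite tot_cat F2_add_ne0.
Qed.

Lemma step_suf F S j : uniq (ord S) -> Even F S -> j \in ord S ->
  suf F (ord (step G S)) j = suf F (ord S) j.
Proof.
move=> U E jS.
have U' : uniq (ord (step G S)) by rewrite (perm_uniq (step_perm S)).
have [p1 [l' [f1 m1 m2]] p3 _ _] := pairup_spec [seq Q <- S.2 | tot G Q != 0].
set ev := [seq Q <- S.2 | tot G Q == 0].
set od := [seq Q <- S.2 | tot G Q != 0].
have eqo : ord (step G S) = S.1 ++ flatten ((pairup od).2 :: ev ++ l').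
  by rewrite /ord /step /= -/ev /od -catA !flatten_cat f1.
have EQs : forall Q, Q \in (pairup od).2 :: ev ++ l' -> tot F Q = 0.
  move=> Q; rewrite inE mem_cat => /or3P [/eqP ->|Q1|Q1].
  - move: p3; rewrite inE => /orP [/eqP ->|]; first by rewrite /tot big_nil.
    by rewrite mem_filter => /andP [_ /E].
  - by move: Q1; rewrite mem_filter => /andP [_ /E].
  - by move: (m1 _ Q1); rewrite mem_filter => /andP [_ /E].
rewrite eqo /ord.
case: (boolP (j \in S.1)) => j1.
  by rewrite !suf_cat_l // !tot_flatten.
rewrite [LHS]suf_cat_r // [RHS]suf_cat_r //.
move: jS; rewrite /ord mem_cat (negbTE j1) /= => /flattenP [Q QS jQ].
have U2 : uniq (flatten ((pairup od).2 :: ev ++ l')).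
  by move: U'; rewrite eqo cat_uniq => /and3P [_ _ ->].
have U1 : uniq (flatten S.2) by move: U; rewrite /ord cat_uniq => /and3P [_ _ ->].
rewrite (suf_flatten U1 E QS jQ) (suf_flatten (Q := Q) U2 EQs) //.
case: (boolP (tot G Q == 0)) => e.
  by rewrite inE mem_cat mem_filter e QS orbT.
have : Q \in od by rewrite mem_filter e.
move=> /m2; rewrite !inE mem_cat => /orP [->|->]; by rewrite ?orbT.
Qed.

Lemma step_nonempty S : (forall Q, Q \in S.2 -> Q != [::]) ->
  forall Q, Q \in (step G S).2 -> Q != [::].
Proof.
move=> NE Q; rewrite /step /= mem_cat => /orP [|].
  by rewrite mem_filter => /andP [_ /NE].
have [_ _ _ p4 _] := pairup_spec [seq Q <- S.2 | tot G Q != 0].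
move=> /p4 [A [B [HA HB ->]]].
move: HA; rewrite mem_filter => /andP [_ /NE]; by case: A.
Qed.

Lemma step_size S : ((size S.2)./2 <= size (step G S).2)%N.
Proof.
have [_ _ _ _ p5] := pairup_spec [seq Q <- S.2 | tot G Q != 0].
rewrite /step /= size_cat p5.
have -> : size S.2 = (size [seq Q <- S.2 | tot G Q == 0%R] + size [seq Q <- S.2 | tot G Q != 0%R])%N.
  by rewrite !size_filter -(count_predC (fun Q => tot G Q == 0%R)).
rewrite -!divn2; lia.
Qed.

Lemma step_sub S x : x \in flatten (step G S).2 -> x \in flatten S.2.
Proof.
rewrite /step /= flatten_cat mem_cat => /orP [|].
  by move=> /flattenP [Q]; rewrite mem_filter => /andP [_ QS] xQ; apply/flattenP; exists Q.
have [p1 _ _ _ _] := pairup_spec [seq Q <- S.2 | tot G Q != 0].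
move=> xp; have : x \in flatten [seq Q <- S.2 | tot G Q != 0] by rewrite -p1 mem_cat xp.
by move=> /flattenP [Q]; rewrite mem_filter => /andP [_ QS] xQ; apply/flattenP; exists Q.
Qed.

End Adv.


Definition Umx n : 'M['F_2]_n := \matrix_(i, j) ((i <= j)%N)%:R.
Definition Mp n (p : 'S_n) : 'M['F_2]_n := perm_mx p *m Umx n *m (perm_mx p)^T.

Lemma MpE n (p : 'S_n) j i : Mp p j i = ((p j <= p i)%N)%:R.
Proof.
by rewrite /Mp tr_perm_mx -row_permE -col_permE !mxE.
Qed.

Lemma Umx_upper n : upper_triangular (Umx n).
Proof. by move=> i j ji; rewrite mxE leqNgt ji. Qed.

Lemma Umx_unit n : Umx n \in unitmx.
Proof.
rewrite unitmxE (@det_rho _ _ _ (fun i => val i)); last first.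
- by move=> a b ba; rewrite mxE leqNgt ba.
- exact: val_inj.
by rewrite big1 ?unitr1 // => i _; rewrite mxE leqnn.
Qed.

Lemma Mp_unit n (p : 'S_n) : Mp p \in unitmx.
Proof. by rewrite /Mp !unitmx_mul tr_perm_mx !unitmx_perm Umx_unit. Qed.

Lemma exists_rank n (pi : seq 'I_n) : perm_eq pi (enum 'I_n) ->
  exists p : 'S_n, forall i, val (p i) = index i pi.
Proof.
move=> Hp.
have memp i : i \in pi by rewrite (perm_mem Hp) mem_enum.
have lt i : (index i pi < n)%N.
  by rewrite -{2}(size_enum_ord n) -(perm_size Hp) index_mem.
have inj : injective (fun i => Ordinal (lt i)).
  by move=> a b [] E; apply: (index_inj a (memp a) (memp b)).
by exists (perm inj) => i; rewrite permE.
Qed.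

Lemma sum_drop (T : eqType) (F : T -> 'F_2) (pi : seq T) k : uniq pi ->
  \sum_(i <- pi | (k <= index i pi)%N) F i = \sum_(i <- drop k pi) F i.
Proof.
move=> U.
have E : pi = take k pi ++ drop k pi by rewrite cat_take_drop.
have D : ~~ has (mem (take k pi)) (drop k pi).
  by move: U; rewrite {1}E cat_uniq => /and3P [_ H _].
rewrite [X in \sum_(i <- X | _) _]E big_cat /=.
rewrite big1_seq ?add0r; last first.
  move=> i /andP [H it]; move: H; rewrite {1}E index_cat it.
  move: (it); rewrite -index_mem size_take.
  move=> H1 H2; have H3 : (index i (take k pi) < k)%N.
    by move: H1; case: (ltnP k (size pi)) => // Hk H1; exact: leq_trans H1 Hk.
  by move: (leq_ltn_trans H2 H3); rewrite ltnn.
rewrite big_seq_cond [RHS]big_seq_cond; apply: eq_bigl => i.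
case: (boolP (i \in drop k pi)) => id; rewrite ?andbF ?andbT //.
have nit : i \notin take k pi by move: D => /hasPn; apply.
rewrite {1}E index_cat (negbTE nit) size_take.
case: ltnP => // H; first by rewrite leq_addr.
by move: id; rewrite drop_oversize.
Qed.

Lemma Mp_suf n (p : 'S_n) (pi : seq 'I_n) : perm_eq pi (enum 'I_n) ->
  (forall i, val (p i) = index i pi) ->
  forall (y : 'cV['F_2]_n) j, (Mp p *m y) j 0 = suf (fun i => y i 0) pi j.
Proof.
move=> Hp Hr y j; rewrite mxE.
have -> : \sum_i Mp p j i * y i 0 = \sum_(i | (index j pi <= index i pi)%N) y i 0.
  rewrite [RHS]big_mkcond; apply: eq_bigr => i _; rewrite MpE -!Hr.
  by case: (p j <= p i)%N; rewrite ?mul1r ?mul0r.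
have -> : \sum_(i | (index j pi <= index i pi)%N) y i 0 =
          \sum_(i <- enum 'I_n | (index j pi <= index i pi)%N) y i 0 by rewrite big_enum_cond.
rewrite -(perm_big _ Hp) sum_drop //.
by rewrite (perm_uniq Hp) enum_uniq.
Qed.

Lemma mul_delta_col n (M : 'M['F_2]_n) f j : (M *m delta_mx f (ord0 : 'I_1)) j 0 = M j f.
Proof.
rewrite mxE (bigD1 f) //= big1 ?addr0; first by rewrite mxE !eqxx mulr1.
by move=> i ni; rewrite mxE (negbTE ni) mulr0.
Qed.


Section Sim.
Variable n : nat.
Variable A : algorithm n.

Definition Fgen (y : vertex n) : 'I_n -> 'F_2 := fun i => y i 0.

Definition S0 : state 'I_n := ([::], [seq [:: i] | i <- enum 'I_n]).

Fixpoint sim (k : nat) : state 'I_n * seq (vertex n * vertex n) :=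
  match k with
  | 0 => (S0, [::])
  | k'.+1 =>
    let sh := sim k' in
    let x := A sh.2 in
    let y := x + A [::] in
    let S' := step (Fgen y) sh.1 in
    (S', rcons sh.2 (x, \col_j (suf (Fgen y) (ord S') j + 1)))
  end.

Definition qx k := A (sim k).2.
Definition qy k := qx k + A [::].

Lemma sim_S k : (sim k.+1).1 = step (Fgen (qy k)) (sim k).1.
Proof. by []. Qed.

Lemma sim_h k : (sim k.+1).2 =
  rcons (sim k).2 (qx k, \col_j (suf (Fgen (qy k)) (ord (sim k.+1).1) j + 1)).
Proof. by []. Qed.

Lemma sim_inv k :
  [/\ perm_eq (ord (sim k).1) (enum 'I_n),
      (forall Q, Q \in (sim k).1.2 -> Q != [::]) &
      (n %/ 2 ^ k <= size (sim k).1.2)%N].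
Proof.
elim: k => [|k [P1 N1 S1]].
  split; rewrite /= /ord /= ?flatten_seq1 //.
  - by move=> Q /mapP [i _ ->].
  - by rewrite size_map size_enum_ord divn1.
rewrite sim_S; split.
- by rewrite (perm_trans (step_perm _ _)).
- exact: step_nonempty.
- apply: leq_trans (step_size _ _).
  by rewrite expnSr divnMA divn2; apply: half_leq.
Qed.

Lemma sim_persist k m : (k < m)%N ->
  Even (Fgen (qy k)) (sim m).1 /\
  forall j, suf (Fgen (qy k)) (ord (sim m).1) j = suf (Fgen (qy k)) (ord (sim k.+1).1) j.
Proof.
elim: m => [//|m IH]; rewrite ltnS leq_eqVlt => /orP [/eqP ->|km].
  by split=> //; rewrite sim_S; apply: step_even_self.
have [E1 S1] := IH km.
have [P1 _ _] := sim_inv m.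
rewrite sim_S; split; first exact: step_even.
move=> j; rewrite step_suf //.
- by rewrite (perm_uniq P1) enum_uniq.
- by rewrite (perm_mem P1) mem_enum.
Qed.

End Sim.


Lemma uniq_flatten_mem (T : eqType) (Qs : seq (seq T)) Q :
  uniq (flatten Qs) -> Q \in Qs -> uniq Q.
Proof.
elim: Qs => [//|Q0 Qs IH] /=; rewrite cat_uniq => /and3P [U0 _ U] .
by rewrite inE => /orP [/eqP ->|/IH]; auto.
Qed.

Lemma tot_delta (T : eqType) (P : seq T) f : uniq P -> f \in P ->
  tot (fun i => ((i == f)%:R : 'F_2)) P = 1.
Proof.
elim: P => [//|a P IH] /= /andP [aP U] fP; rewrite /tot big_cons.
case: (eqVneq a f) => [E|af].
  rewrite big1_seq ?addr0 // => i /andP [_ iP].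
  by case: eqP => // E'; move: aP; rewrite E -E' iP.
rewrite add0r; apply: IH => //.
by move: fP; rewrite inE eq_sym (negbTE af).
Qed.

Section Advers.
Variable n : nat.
Variable A : algorithm n.
Hypothesis n0 : (0 < n)%N.

Lemma adversary : exists (p : 'S_n) (s : vertex n), forall t,
  finds_sink_within A (fun v => Mp p *m (v + s)) t -> (trunc_log 2 n < t)%N.
Proof.
set T := trunc_log 2 n.
have [PT NT ST] := sim_inv A T.
set S := (sim A T).1 in PT NT ST.
have hsz : (0 < size S.2)%N.
  apply: leq_trans ST; rewrite divn_gt0 ?expn_gt0 //; exact: trunc_logP.
have UP : uniq (ord S) by rewrite (perm_uniq PT) enum_uniq.
case ES : S.2 hsz => [//|Q0 Qs] _.
have : Q0 != [::] by apply: NT; rewrite ES mem_head.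
case: Q0 ES => [//|d r] ES _.
set rest := r ++ flatten Qs.
set f := last d rest.
have Epi : ord S = S.1 ++ d :: rest by rewrite /ord ES.
have fin : f \in flatten S.2 by rewrite ES /= -/rest mem_last.
have fnot1 : f \notin S.1.
  move: UP; rewrite /ord cat_uniq => /and3P [_ H _].
  by apply: contra H => fS; apply/hasP; exists f.
have Ufl : uniq (d :: rest) by move: UP; rewrite Epi cat_uniq => /and3P [_ _ ->].
have idxf : forall j, (index j (ord S) <= index f (ord S))%N.
  move=> j; rewrite Epi [X in (_ <= X)%N]index_cat (negbTE fnot1) index_last //.
  have : (index j (S.1 ++ d :: rest) < size (S.1 ++ d :: rest))%N.
    by rewrite index_mem -Epi (perm_mem PT) mem_enum.
  by rewrite size_cat /= addnS ltnS.
have [p Hp] := exists_rank PT.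
set e := (delta_mx f (ord0 : 'I_1) : vertex n).
exists p, (A [::] + e).
set o := fun v => Mp p *m (v + (A [::] + e)).
have key : forall k, (k < T)%N ->
    o (qx A k) = \col_j (suf (Fgen (qy A k)) (ord (sim A k.+1).1) j + 1).
  move=> k kT; apply/matrixP => j c; rewrite (ord1 c) [RHS]mxE.
  have [_ Hs] := sim_persist A kT.
  rewrite /o addrA mulmxDr [LHS]mxE -/(qy A k) (Mp_suf PT Hp) -Hs.
  by rewrite mul_delta_col MpE !Hp idxf.
have hist : forall k, (k <= T)%N -> history A o k = (sim A k).2.
  elim=> [//|k IH] kT /=.
  by rewrite IH ?(ltnW kT) // -/(qx A k) key.
have nosink : forall k, (k < T)%N -> o (qx A k) != 0.
  move=> k kT; apply/eqP => H0.
  have H1 : qx A k + (A [::] + e) = 0.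
    by rewrite -(mulKmx (Mp_unit p) (qx A k + _)) -/(o _) H0 mulmx0.
  have H2 : qy A k = - e by apply/eqP; rewrite -addr_eq0 /qy -addrA H1.
  have [E _] := sim_persist A kT.
  move: fin => /flattenP [P PS fP].
  have UPs : uniq P.
    apply: (uniq_flatten_mem _ PS).
    by move: UP; rewrite /ord cat_uniq => /and3P [_ _ ->].
  have := E P PS.
  have -> : tot (Fgen (qy A k)) P = - tot (fun i => ((i == f)%:R : 'F_2)) P.
    rewrite /tot -sumrN; apply: eq_bigr => i _.
    by rewrite /Fgen H2 !mxE eqxx andbT.
  by rewrite tot_delta // => /eqP; rewrite oppr_eq0 oner_eq0.
move=> t [k [kt Hk]].
rewrite ltnNge; apply/negP => tT.
have kT : (k < T)%N by apply: leq_trans kt tT.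
move: (nosink k kT) Hk; rewrite /query (hist k (ltnW kT)) -/(qx A k).
by move=> /eqP.
Qed.
End Advers.


Definition phiF (x : 'F_2) : R := if x == 0 then 1 else -1.
Definition phib (b : bool) : R := if b then -1 else 1.

Lemma F2_cases (x : 'F_2) : x = 0 \/ x = 1.
Proof. by case: x => [[|[|m]] Hm]; [left|right|]; try apply/val_inj. Qed.

Lemma phiF_add x y : phiF (x + y) = phiF x * phiF y.
Proof.
by case: (F2_cases x) => ->; case: (F2_cases y) => ->;
  rewrite /phiF ?addr0 ?add0r ?eqxx ?oner_eq0 ?mulr1 ?mul1r // ?mulrNN ?mulr1;
  have -> : (1 + 1 : 'F_2) = 0 by apply/val_inj.
Qed.

Lemma phiF_sq x : phiF x * phiF x = 1.
Proof. by rewrite /phiF; case: ifP; rewrite ?mulrNN mulr1. Qed.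

Lemma phib_sq b : phib b * phib b = 1.
Proof. by rewrite /phib; case: b; rewrite ?mulrNN mulr1. Qed.

Lemma phiF_neq0 x : phiF x != 0.
Proof. by rewrite /phiF; case: ifP; rewrite ?oppr_eq0 oner_eq0. Qed.

Lemma phib_neq0 b : phib b != 0.
Proof. by rewrite /phib; case: b; rewrite ?oppr_eq0 oner_eq0. Qed.

Lemma phiF_lt0 x : (phiF x < 0) = (x != 0).
Proof. by rewrite /phiF; case: ifP => _; rewrite ?oppr_lt0 ?ltr01 // ltr10. Qed.

Lemma phiF_out x : (if phiF x < 0 then 1 else 0) = x.
Proof. by rewrite phiF_lt0; case: (F2_cases x) => ->; rewrite ?eqxx ?oner_eq0. Qed.

Section Real.
Variable n : nat.
Variable p : 'S_n.
Variable c : 'cV['F_2]_n.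

Definition dd i := phiF (c i 0).
Definition Lmx : 'M[R]_n :=
  \matrix_(i, k) (if i == k then 1 else if (p i < p k)%N then 2 * dd i * dd k else 0).
Definition qv : 'cV[R]_n := \col_i dd i.

Variable J : {set 'I_n}.
Definition sg k := phib (k \in J).
Definition Gp k := \prod_(l | (p k < p l)%N) sg l.
Definition bsol : 'cV[R]_n := \col_j (sg j * dd j * Gp j).

Lemma telesc j : Gp j + \sum_(k | (p j < p k)%N) (if k \in J then 2 * Gp k else 0) = 1.
Proof.
pose H (m : nat) := \prod_(l | (m <= p l)%N) sg l.
have HG k : Gp k = H (p k).+1 by [].
have HS k : sg k * Gp k = H (p k).
  rewrite /H (bigD1 k) //=; congr (_ * _); apply: eq_bigl => l.
  by rewrite ltn_neqAle andbC; congr (_ && _); rewrite val_eqE (inj_eq perm_inj) eq_sym.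
have E1 : \sum_(k | (p j < p k)%N) (if k \in J then 2 * Gp k else 0) =
          \sum_(k | (p j < p k)%N) (H (p k).+1 - H (p k)).
  apply: eq_bigr => k _; rewrite -HG -HS /sg /phib.
  by case: (k \in J); rewrite ?mulN1r ?opprK ?mul1r ?subrr // mulr_natl mulr2n.
have E2 : \sum_(r < n | (p j < r)%N) (H r.+1 - H r) =
          \sum_(k | (p j < p k)%N) (H (p k).+1 - H (p k)).
  by rewrite (reindex_inj (@perm_inj _ p)).
have E3 : \sum_((p j).+1 <= r < n) (H r.+1 - H r) =
          \sum_(r < n | (p j < r)%N) (H r.+1 - H r).
  by rewrite big_geq_mkord.
rewrite E1 -E2 -E3 telescope_sumr ?ltn_ord //.
have -> : H n = 1 by rewrite /H big1 // => l; rewrite leqNgt ltn_ord.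
by rewrite -HG addrC subrK.
Qed.

Lemma basis_mul : basis_mx Lmx J *m bsol = qv.
Proof.
apply/matrixP => j c0; rewrite (ord1 c0) [RHS]mxE mxE.
under eq_bigr => k _ do rewrite !mxE.
rewrite (bigD1 j) //= eqxx.
have -> : (if j \in J then - 1 else 1) * (sg j * dd j * Gp j) = dd j * Gp j.
  rewrite -[X in X * _]/(sg j) !mulrA phib_sq mul1r //.
have -> : \sum_(k | k != j)
     (if k \in J then - (if j == k then 1 else if (p j < p k)%N then 2 * dd j * dd k else 0)
      else (j == k)%:R) * (sg k * dd k * Gp k) =
   \sum_(k | (p j < p k)%N) dd j * (if k \in J then 2 * Gp k else 0).
  rewrite big_mkcond [RHS]big_mkcond; apply: eq_bigr => k _.
  case: (eqVneq k j) => [->|kj]; first by rewrite ltnn.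
  rewrite /=.
  case: (p j < p k)%N; last by case: (k \in J); rewrite ?oppr0 !mul0r.
  rewrite /sg /phib; case: (k \in J); last by rewrite mul0r mulr0.
  have key : forall a t G : R, t * t = 1 -> - (2 * a * t) * (-1 * t * G) = a * (2 * G).
    by move=> a t G H; transitivity (a * (2 * G) * (t * t)); [ring | rewrite H mulr1].
  exact/key/phiF_sq.
by rewrite -big_distrr /= -mulrDr telesc mulr1.
Qed.

Lemma basis_unit : basis_mx Lmx J \in unitmx.
Proof.
rewrite unitmxE unitfE (@det_rho _ _ _ (fun i => val (p i))); last first.
- move=> a b ba; rewrite !mxE.
  have ab : (a == b) = false by apply: negbTE; apply: contraTneq ba => ->; rewrite ltnn.
  rewrite ab ltnNge (ltnW ba) /=; by case: (b \in J); rewrite ?oppr0.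
- by move=> a b /val_inj /perm_inj.
rewrite prodf_seq_neq0; apply/allP => i _; rewrite !mxE eqxx.
by case: (i \in J); rewrite ?oppr_eq0 oner_eq0.
Qed.

Lemma basic_solE : basic_sol Lmx qv J = bsol.
Proof. by rewrite /basic_sol -basis_mul mulKmx // basis_unit. Qed.

End Real.

Lemma Lmx_P n (p : 'S_n) c : P_matrix (Lmx p c).
Proof.
move=> S; rewrite /principal_submx (@det_rho _ _ _ (fun a => val (p (enum_val a)))); last first.
- move=> a b ba; rewrite !mxE.
  have ab : (enum_val a == enum_val b) = false.
    by apply: negbTE; apply: contraTneq ba => ->; rewrite ltnn.
  by rewrite ab ltnNge (ltnW ba).
- by move=> a b /val_inj /perm_inj /enum_val_inj.
rewrite big1 ?ltr01 // => i _; by rewrite !mxE eqxx.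
Qed.

Lemma phiF0 : phiF 0 = 1.
Proof. by rewrite /phiF eqxx. Qed.

Lemma Mp_split n (p : 'S_n) (v : 'cV['F_2]_n) i :
  (Mp p *m v) i 0 = v i 0 + \sum_(l | (p i < p l)%N) v l 0.
Proof.
rewrite mxE (bigD1 i) //= MpE leqnn mul1r; congr (_ + _).
rewrite big_mkcond [RHS]big_mkcond; apply: eq_bigr => k _.
case: (eqVneq k i) => [->|ki] /=; first by rewrite ltnn.
rewrite MpE leq_eqVlt.
have -> : (val (p i) == val (p k)) = false.
  by apply: negbTE; rewrite val_eqE (inj_eq perm_inj) eq_sym.
by case: (p i < p k)%N; rewrite ?mul1r ?mul0r.
Qed.

Lemma Mp_realizable n (p : 'S_n) (s : vertex n) : realizable (fun v => Mp p *m (v + s)).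
Proof.
set c := Mp p *m s.
exists (Lmx p c), (qv c); split; [exact: Lmx_P | split].
- move=> J i; rewrite basic_solE mxE.
  rewrite !mulf_neq0 ?phib_neq0 ?phiF_neq0 //.
  rewrite prodf_seq_neq0; apply/allP => l _; apply/implyP => _; exact: phib_neq0.
- move=> v; apply/matrixP => i c0.
  rewrite (ord1 c0) /lcp_outmap [RHS]mxE basic_solE [X in (X < 0)]mxE.
  have sgE k : sg (vset v) k = phiF (v k 0).
    by rewrite /sg /vset inE /phib /phiF; case: eqP.
  have -> : Gp p (vset v) i = phiF (\sum_(l | (p i < p l)%N) v l 0).
    rewrite (big_morph phiF phiF_add phiF0); apply: eq_bigr => l _; exact: sgE.
  rewrite sgE /dd -!phiF_add phiF_out.
  by rewrite mulmxDr mxE Mp_split addrAC.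
Qed.


Local Close Scope ring_scope.

Theorem theorem24 :
  exists c N : nat, forall n : nat, (N <= n)%N ->
    forall A : algorithm n,
      exists o : outmap n,
        matousek_type o /\ realizable o /\
        forall t : nat, finds_sink_within A o t -> (trunc_log 2 n <= c * t)%N.
Proof.
exists 1%N, 1%N => n n1 A.
have [p [s H]] := adversary A n1.
exists (fun v => Mp p *m (v + s))%R; split; [|split].
- exists p, (Umx n), s; split; [exact: Umx_upper | split; [exact: Umx_unit | by []]].
- exact: Mp_realizable.
- by move=> t /H lt; rewrite mul1n ltnW.
Qed.
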